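(* Let $(A,*,\{\cdot,\cdot,\cdot\})$ be a pre-Lie-Yamaguti algebra. Then: (i) the operations $[x,y]_C=x*y-y*x$ and $[\![x,y,z]\!]_C=\{x,y,z\}_D+\{x,y,z\}-\{y,x,z\}$ ($x,y,z\in A$) define a Lie-Yamaguti algebra structure on $A$ (the subadjacent Lie-Yamaguti algebra $A^c$); (ii) defining $L:A\to\mathfrak{gl}(A)$, $L_xz=x*z$, and $\mathcal R:\otimes^2A\to\mathfrak{gl}(A)$, $\mathcal R(x,y)z=\{z,x,y\}$, the triple $(A;L,\mathcal R)$ is a representation of $A^c$ on $A$, and the identity map $\mathrm{Id}:A\to A$ is a relative Rota-Baxter operator on $A^c$ with respect to $(A;L,\mathcal R)$.
   Context: All vector spaces are over a field of characteristic $0$. A pre-Lie-Yamaguti algebra is a vector space $A$ with a bilinear operation $*$ and a trilinear operation $\{\cdot,\cdot,\cdot\}$ such that, writing $[x,y]_C=x*y-y*x$, $(x,y,z)=(x*y)*z-x*(y*z)$ and $\{x,y,z\}_D=\{z,y,x\}-\{z,x,y\}+(y,x,z)-(x,y,z)$, for all $x,y,z,w,t\in A$: (P1) $\{z,[x,y]_C,w\}-\{y*z,x,w\}+\{x*z,y,w\}=0$; (P2) $\{x,y,[z,w]_C\}=z*\{x,y,w\}-w*\{x,y,z\}$; (P3) $\{\{x,y,z\},w,t\}-\{\{x,y,w\},z,t\}-\{x,y,\{z,w,t\}_D\}-\{x,y,\{z,w,t\}\}+\{x,y,\{w,z,t\}\}+\{z,w,\{x,y,t\}\}_D=0$; (P4)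 $\{z,\{x,y,w\}_D,t\}+\{z,\{x,y,w\},t\}-\{z,\{y,x,w\},t\}+\{z,w,\{x,y,t\}_D\}+\{z,w,\{x,y,t\}\}-\{z,w,\{y,x,t\}\}=\{x,y,\{z,w,t\}\}_D-\{\{x,y,z\}_D,w,t\}$; (P5) $\{x,y,z\}_D*w+\{x,y,z\}*w-\{y,x,z\}*w=\{x,y,z*w\}_D-z*\{x,y,w\}_D$. A Lie-Yamaguti algebra is a vector space $\mathfrak g$ with a bilinear skew-symmetric $[\cdot,\cdot]$ and a trilinear $[\![\cdot,\cdot,\cdot]\!]$ skew-symmetric in its first two arguments such that for all $x,y,z,w,t$: (1) $[[x,y],z]+[[y,z],x]+[[z,x],y]+[\![x,y,z]\!]+[\![y,z,x]\!]+[\![z,x,y]\!]=0$; (2) $[\![[x,y],z,w]\!]+[\![[y,z],x,w]\!]+[\![[z,x],y,w]\!]=0$; (3) $[\![x,y,[z,w]]\!]=[[\![x,y,z]\!],w]+[z,[\![x,y,w]\!]]$; (4) $[\![x,y,[\![z,w,t]\!]]\!]=[\![[\![x,y,z]\!],w,t]\!]+[\![z,[\![x,y,w]\!],t]\!]+[\![z,w,[\![x,y,t]\!]]\!]$. A representation $(V;\rho,\mu)$ of $\mathfrak g$ is a linear $\rho:\mathfrak g\to\mathfrak{gl}(V)$ and bilinear $\mu:\otimes^2\mathfrak g\to\mathfrak{gl}(V)$ such that, with $D_{\rho,\mu}(x,y):=\mu(y,x)-\mu(x,y)+[\rho(x),\rho(y)]-\rho([x,y])$: $\mu([x,y],z)-\mu(x,z)\rho(y)+\mu(y,z)\rho(x)=0$;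 $\mu(x,[y,z])-\rho(y)\mu(x,z)+\rho(z)\mu(x,y)=0$; $\rho([\![x,y,z]\!])=[D_{\rho,\mu}(x,y),\rho(z)]$; $\mu(z,w)\mu(x,y)-\mu(y,w)\mu(x,z)-\mu(x,[\![y,z,w]\!])+D_{\rho,\mu}(y,z)\mu(x,w)=0$; $\mu([\![x,y,z]\!],w)+\mu(z,[\![x,y,w]\!])=[D_{\rho,\mu}(x,y),\mu(z,w)]$. A relative Rota-Baxter operator on $\mathfrak g$ with respect to $(V;\rho,\mu)$ is a linear map $T:V\to\mathfrak g$ with $[Tu,Tv]=T(\rho(Tu)v-\rho(Tv)u)$ and $[\![Tu,Tv,Tw]\!]=T(D_{\rho,\mu}(Tu,Tv)w+\mu(Tv,Tw)u-\mu(Tu,Tw)v)$ for all $u,v,w\in V$. *)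

(* Defs.v *)
From HB Require Import structures.
From mathcomp Require Import all_boot all_order all_algebra.
Set Implicit Arguments. Unset Strict Implicit. Unset Printing Implicit Defensive.
Import GRing.Theory.
Local Open Scope ring_scope.

Section Defs.
Variable K : fieldType.

Definition lin (U W : lmodType K) (f : U -> W) : Prop :=
  forall (a : K) (u v : U), f (a *: u + v) = a *: f u + f v.

Definition bilin (U W : lmodType K) (f : U -> U -> W) : Prop :=
  (forall x, lin (f x)) /\ (forall y, lin (fun x => f x y)).

Definition trilin (U W : lmodType K) (f : U -> U -> U -> W) : Prop :=
  (forall x y, lin (f x y)) /\ (forall x z, lin (fun y => f x y z)) /\
  (forall y z, lin (fun x => f x y z)).

Section PLY.
Variable A : lmodType K.
Variable mul : A -> A -> A.
Variable br : A -> A -> A -> A.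

Definition commC (x y : A) : A := mul x y - mul y x.
Definition assoc (x y z : A) : A := mul (mul x y) z - mul x (mul y z).
Definition braceD (x y z : A) : A :=
  br z y x - br z x y + assoc y x z - assoc x y z.

Definition is_preLY : Prop :=
  bilin mul /\ trilin br /\
  (forall x y z w,
     br z (commC x y) w - br (mul y z) x w + br (mul x z) y w = 0) /\
  (forall x y z w,
     br x y (commC z w) = mul z (br x y w) - mul w (br x y z)) /\
  (forall x y z w t,
     br (br x y z) w t - br (br x y w) z t - br x y (braceD z w t)
     - br x y (br z w t) + br x y (br w z t) + braceD z w (br x y t) = 0) /\
  (forall x y z w t,
     br z (braceD x y w) t + br z (br x y w) t - br z (br y x w) t
     + br z w (braceD x y t) + br z w (br x y t) - br z w (br y x t)
     = braceD x y (br z w t) - br (braceD x y z) w t) /\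
  (forall x y z w,
     mul (braceD x y z) w + mul (br x y z) w - mul (br y x z) w
     = braceD x y (mul z w) - mul z (braceD x y w)).

Definition triC (x y z : A) : A := braceD x y z + br x y z - br y x z.
End PLY.

Section LY.
Variable g : lmodType K.
Variable lb : g -> g -> g.
Variable tb : g -> g -> g -> g.

Definition is_LY : Prop :=
  bilin lb /\ trilin tb /\
  (forall x y, lb x y = - lb y x) /\
  (forall x y z, tb x y z = - tb y x z) /\
  (forall x y z,
     lb (lb x y) z + lb (lb y z) x + lb (lb z x) y
     + tb x y z + tb y z x + tb z x y = 0) /\
  (forall x y z w,
     tb (lb x y) z w + tb (lb y z) x w + tb (lb z x) y w = 0) /\
  (forall x y z w,
     tb x y (lb z w) = lb (tb x y z) w + lb z (tb x y w)) /\
  (forall x y z w t,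
     tb x y (tb z w t) = tb (tb x y z) w t + tb z (tb x y w) t
                         + tb z w (tb x y t)).

(* representations: rho : g -> gl(V) linear, mu : g (x) g -> gl(V) bilinear;
   endomorphisms are linear maps V -> V, products are compositions,
   and all identities are stated pointwise on v : V. *)
Section Rep.
Variable V : lmodType K.
Variable rho : g -> V -> V.
Variable mu : g -> g -> V -> V.

Definition Drm (x y : g) (v : V) : V :=
  mu y x v - mu x y v + (rho x (rho y v) - rho y (rho x v)) - rho (lb x y) v.

Definition is_rep : Prop :=
  (forall x, lin (rho x)) /\ (forall v, lin (fun x => rho x v)) /\
  (forall x y, lin (mu x y)) /\ (forall v, bilin (fun x y => mu x y v)) /\
  (forall x y z v, mu (lb x y) z v - mu x z (rho y v) + mu y z (rho x v) = 0) /\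
  (forall x y z v, mu x (lb y z) v - rho y (mu x z v) + rho z (mu x y v) = 0) /\
  (forall x y z v, rho (tb x y z) v = Drm x y (rho z v) - rho z (Drm x y v)) /\
  (forall x y z w v,
     mu z w (mu x y v) - mu y w (mu x z v) - mu x (tb y z w) v
     + Drm y z (mu x w v) = 0) /\
  (forall x y z w v,
     mu (tb x y z) w v + mu z (tb x y w) v
     = Drm x y (mu z w v) - mu z w (Drm x y v)).

Definition is_relRB (T : V -> g) : Prop :=
  lin T /\
  (forall u v, lb (T u) (T v) = T (rho (T u) v - rho (T v) u)) /\
  (forall u v w, tb (T u) (T v) (T w)
     = T (Drm (T u) (T v) w + mu (T v) (T w) u - mu (T u) (T w) v)).
End Rep.
End LY.
End Defs.

(* Main.v *)
Require Import Defs.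
From mathcomp Require Import all_boot all_order all_algebra.
Set Implicit Arguments. Unset Strict Implicit. Unset Printing Implicit Defensive.
Import GRing.Theory.
Local Open Scope ring_scope.

Inductive zexp := ZAt of nat | ZN of zexp | ZA of zexp & zexp | ZZ | ZM of zexp & int.

Fixpoint zev (V : zmodType) (env : seq V) (e : zexp) : V :=
  match e with
  | ZAt i => nth 0 env i
  | ZN e => - zev env e
  | ZA a b => zev env a + zev env b
  | ZZ => 0
  | ZM e k => zev env e *~ k
  end.

Fixpoint zco (i : nat) (e : zexp) : int :=
  match e with
  | ZAt j => ((i == j) : nat)%:Z
  | ZN e => - zco i e
  | ZA a b => zco i a + zco i b
  | ZZ => 0
  | ZM e k => zco i e * k
  end.

Fixpoint zbd (e : zexp) : nat :=
  match e with
  | ZAt j => j.+1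
  | ZN e => zbd e
  | ZA a b => maxn (zbd a) (zbd b)
  | ZZ => 0
  | ZM e _ => zbd e
  end.

Lemma zev_sum (V : zmodType) (env : seq V) e n : (zbd e <= n)%N ->
  zev env e = \sum_(i < n) nth 0 env i *~ zco i e.
Proof.
elim: e => [j|e IH|a IHa b IHb||e IH k] /=.
- move=> hj; rewrite (bigD1 (Ordinal hj)) //= eqxx mulr1z big1 ?addr0 //.
  move=> i hi; rewrite (_ : (nat_of_ord i == j) = false) ?mulr0z //.
  apply/negbTE; move: hi; apply: contra => /eqP e; apply/eqP; exact: val_inj.
- move=> h; rewrite IH // -sumrN; apply: eq_bigr => i _; by rewrite mulrNz.
- rewrite geq_max => /andP [ha hb]; rewrite IHa // IHb // -big_split /=.
  apply: eq_bigr => i _; by rewrite mulrzDr.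
- move=> _; rewrite big1 // => i _; by rewrite mulr0z.
- move=> h; rewrite IH // mulrz_suml; apply: eq_bigr => i _; by rewrite mulrzA.
Qed.

Lemma zev_eq (V : zmodType) (env : seq V) e1 e2 :
  all (fun i => zco i e1 == zco i e2) (iota 0 (maxn (zbd e1) (zbd e2))) ->
  zev env e1 = zev env e2.
Proof.
move=> /allP h.
rewrite !(@zev_sum _ env _ (maxn (zbd e1) (zbd e2))) ?leq_maxl ?leq_maxr //.
apply: eq_bigr => i _; have := h i; rewrite mem_iota add0n leq0n ltn_ord => /(_ isT) /eqP ->.
done. Qed.

Ltac zmem x l :=
  match l with
  | @nil _ => constr:(false)
  | @cons _ x _ => constr:(true)
  | @cons _ _ ?l' => zmem x l'
  end.
Ltac zaddl x l :=
  let b := zmem x l in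
  match b with true => l | false => constr:(x :: l) end.
Ltac zatoms e l :=
  match e with
  | @GRing.add _ ?a ?b => let l1 := zatoms a l in zatoms b l1
  | @GRing.opp _ ?a => zatoms a l
  | @GRing.zero _ => l
  | @intmul _ ?a _ => zatoms a l
  | _ => zaddl e l
  end.
Ltac zidx x l :=
  match l with
  | @cons _ x _ => constr:(0%N)
  | @cons _ _ ?l' => let n := zidx x l' in constr:(n.+1)
  end.
Ltac zreify e l :=
  match e with
  | @GRing.add _ ?a ?b => let ra := zreify a l in let rb := zreify b l in constr:(ZA ra rb)
  | @GRing.opp _ ?a => let ra := zreify a l in constr:(ZN ra)
  | @GRing.zero _ => constr:(ZZ)
  | @intmul _ ?a ?k => let ra := zreify a l in constr:(ZM ra k)
  | _ => let n := zidx e l in constr:(ZAt n)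
  end.
Ltac zsolve :=
  match goal with |- @eq ?T ?L ?R =>
    let l := zatoms L (@nil T) in let l := zatoms R l in
    let eL := zreify L l in let eR := zreify R l in
    change (zev l eL = zev l eR); apply: zev_eq; vm_compute; reflexivity
  end.


Ltac zmemc x l :=
  match l with
  | @nil _ => constr:(false)
  | @cons _ ?y ?l' =>
     match constr:(true) with
     | _ => let _ := constr:(@erefl _ x : x = y) in constr:(true)
     | _ => zmemc x l'
     end
  end.
Ltac zaddlc x l :=
  let b := zmemc x l in
  match b with true => l | false => constr:(x :: l) end.
Ltac zatomsc e l :=
  match e with
  | @GRing.add _ ?a ?b => let l1 := zatomsc a l in zatomsc b l1
  | @GRing.opp _ ?a => zatomsc a l
  | @GRing.zero _ => l
  | @intmul _ ?a _ => zatomsc a l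
  | _ => zaddlc e l
  end.
Ltac zidxc x l :=
  match l with
  | @cons _ ?y ?l' =>
     match constr:(true) with
     | _ => let _ := constr:(@erefl _ x : x = y) in constr:(0%N)
     | _ => let n := zidxc x l' in constr:(n.+1)
     end
  end.
Ltac zreifyc e l :=
  match e with
  | @GRing.add _ ?a ?b => let ra := zreifyc a l in let rb := zreifyc b l in constr:(ZA ra rb)
  | @GRing.opp _ ?a => let ra := zreifyc a l in constr:(ZN ra)
  | @GRing.zero _ => constr:(ZZ)
  | @intmul _ ?a ?k => let ra := zreifyc a l in constr:(ZM ra k)
  | _ => let n := zidxc e l in constr:(ZAt n)
  end.
Ltac zsolvec :=
  match goal with |- @eq ?T ?L ?R =>
    let l := zatomsc L (@nil T) in let l := zatomsc R l in
    let eL := zreifyc L l in let eR := zreifyc R l in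
    change (zev l eL = zev l eR); apply: zev_eq; vm_compute; reflexivity
  end.

Lemma combine (V : zmodType) (L R S : V) : L - R = S -> S = 0 -> L = R.
Proof. by move=> h1 h2; apply/eqP; rewrite -subr_eq0 h1 h2. Qed.

Section Lin.
Variables (K : fieldType) (U W : lmodType K) (f : U -> W).
Lemma lin_add : lin f -> forall u v, f (u + v) = f u + f v.
Proof. by move=> h u v; rewrite -[u in LHS]scale1r h scale1r. Qed.
Lemma lin_0 : lin f -> f 0 = 0.
Proof. move=> h; have := h 1 0 0; rewrite scaler0 addr0 scale1r.
by move/(congr1 (fun y => y - f 0)); rewrite subrr addrK => /esym. Qed.
Lemma lin_opp : lin f -> forall u, f (- u) = - f u.
Proof. by move=> h u; rewrite -[- u]addr0 -scaleN1r h lin_0 // addr0 scaleN1r. Qed.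
End Lin.
Section PLYlemmas.
Variables (K : fieldType) (A : lmodType K) (mul : A -> A -> A) (br : A -> A -> A -> A).
Hypothesis H : is_preLY mul br.
Let hm1 : forall x, lin (mul x). Proof. by case: H => [[]]. Qed.
Let hm2 : forall y, lin (fun x => mul x y). Proof. by case: H => [[]]. Qed.
Let hb : trilin br. Proof. by case: H => _ []. Qed.
Lemma mulDl x y z : mul (x + y) z = mul x z + mul y z. Proof. exact: (lin_add (hm2 z)). Qed.
Lemma mulDr x y z : mul x (y + z) = mul x y + mul x z. Proof. exact: (lin_add (hm1 x)). Qed.
Lemma mulNl x z : mul (- x) z = - mul x z. Proof. exact: (lin_opp (hm2 z)). Qed.
Lemma mulNr x z : mul x (- z) = - mul x z. Proof. exact: (lin_opp (hm1 x)). Qed.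
Lemma mul0r' x : mul 0 x = 0. Proof. exact: (lin_0 (hm2 x)). Qed.
Lemma mulr0' x : mul x 0 = 0. Proof. exact: (lin_0 (hm1 x)). Qed.
Lemma brD1 x x' y z : br (x + x') y z = br x y z + br x' y z. Proof. case: hb => _ [_ h]; exact: (lin_add (h y z)). Qed.
Lemma brD2 x y y' z : br x (y + y') z = br x y z + br x y' z. Proof. case: hb => _ [h _]; exact: (lin_add (h x z)). Qed.
Lemma brD3 x y z z' : br x y (z + z') = br x y z + br x y z'. Proof. case: hb => h _; exact: (lin_add (h x y)). Qed.
Lemma brN1 x y z : br (- x) y z = - br x y z. Proof. case: hb => _ [_ h]; exact: (lin_opp (h y z)). Qed.
Lemma brN2 x y z : br x (- y) z = - br x y z. Proof. case: hb => _ [h _]; exact: (lin_opp (h x z)). Qed.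
Lemma brN3 x y z : br x y (- z) = - br x y z. Proof. case: hb => h _; exact: (lin_opp (h x y)). Qed.

Let hZ (U W : lmodType K) (f : U -> W) : lin f -> forall a u, f (a *: u) = a *: f u.
Proof. by move=> h a u; rewrite -[a *: u]addr0 h lin_0 // addr0. Qed.
Lemma mulZl a x z : mul (a *: x) z = a *: mul x z. Proof. exact: (hZ (hm2 z)). Qed.
Lemma mulZr a x z : mul x (a *: z) = a *: mul x z. Proof. exact: (hZ (hm1 x)). Qed.
Lemma brZ1 a x y z : br (a *: x) y z = a *: br x y z. Proof. case: hb => _ [_ h]; exact: (hZ (h y z)). Qed.
Lemma brZ2 a x y z : br x (a *: y) z = a *: br x y z. Proof. case: hb => _ [h _]; exact: (hZ (h x z)). Qed.
Lemma brZ3 a x y z : br x y (a *: z) = a *: br x y z. Proof. case: hb => h _; exact: (hZ (h x y)). Qed.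

Lemma E1 a b c d : br c (commC mul a b) d - br (mul b c) a d + br (mul a c) b d = 0.
Proof. by case: H => _ [_ [p1 _]]; apply: p1. Qed.
Lemma E2 a b c d : br a b (commC mul c d) - (mul c (br a b d) - mul d (br a b c)) = 0.
Proof. case: H => _ [_ [_ [p2 _]]]; by rewrite p2 subrr. Qed.
Lemma E3 a b c d e : br (br a b c) d e - br (br a b d) c e - br a b (braceD mul br c d e)
  - br a b (br c d e) + br a b (br d c e) + braceD mul br c d (br a b e) = 0.
Proof. by case: H => _ [_ [_ [_ [p3 _]]]]; apply: p3. Qed.
Lemma E4 a b c d e : (br c (braceD mul br a b d) e + br c (br a b d) e - br c (br b a d) e
  + br c d (braceD mul br a b e) + br c d (br a b e) - br c d (br b a e))
  - (braceD mul br a b (br c d e) - br (braceD mul br a b c) d e) = 0.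
Proof. case: H => _ [_ [_ [_ [_ [p4 _]]]]]; by rewrite p4 subrr. Qed.
Lemma E5 a b c d : (mul (braceD mul br a b c) d + mul (br a b c) d - mul (br b a c) d)
  - (braceD mul br a b (mul c d) - mul c (braceD mul br a b d)) = 0.
Proof. case: H => _ [_ [_ [_ [_ [_ p5]]]]]; by rewrite p5 subrr. Qed.
End PLYlemmas.

Ltac expand H := rewrite /triC /braceD /assoc /commC /Drm /=;
  rewrite ?(mulDl H, mulDr H, mulNl H, mulNr H, brD1 H, brD2 H, brD3 H, brN1 H, brN2 H, brN3 H).
Ltac expandZ H := rewrite /triC /braceD /assoc /commC /Drm /=;
  rewrite ?(mulDl H, mulDr H, mulNl H, mulNr H, brD1 H, brD2 H, brD3 H, brN1 H, brN2 H, brN3 H,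
            mulZl H, mulZr H, brZ1 H, brZ2 H, brZ3 H, scalerDr, scalerN).

Lemma LY1 (K : fieldType) (A : lmodType K) (mul : A -> A -> A) (br : A -> A -> A -> A)
  (H : is_preLY mul br) x y z : commC mul (commC mul x y) z + commC mul (commC mul y z) x + commC mul (commC mul z x) y
     + triC mul br x y z + triC mul br y z x + triC mul br z x y = 0.
Proof. expand H. zsolve. Qed.

Lemma LY2 (K : fieldType) (A : lmodType K) (mul : A -> A -> A) (br : A -> A -> A -> A)
  (H : is_preLY mul br) (x y z w : A) :
  triC mul br (commC mul x y) z w + triC mul br (commC mul y z) x w + triC mul br (commC mul z x) y w = 0.
Proof.
apply: (combine (S := (br w z (commC mul x y) - (mul x (br w z y) - mul y (br w z x))) - (br w (commC mul x y) z - br (mul y w) x z + br (mul x w) y z) - (br z (commC mul x y) w - br (mul y z) x w + br (mul x z) y w) + (br w x (commC mul y z) - (mul y (br w x z) - mul z (br w x y))) - (br w (commC mul y z) x - br (mul z w) y x + br (mul y w) z x) + ((mul (braceD mul br y z x) w + mul (br y z x) w - mul (br z y x) w) - (braceD mul br y z (mul x w) - mul x (braceD mul br y z w))) - ((mul (braceD mul br x z y) w + mul (br x z y) w - mul (br z x y) w) - (braceD mul br x z (mul y w) - mul y (braceD mul br x z w))) + ((mul (braceD mul br x y z) w + mul (br x y z) w - mul (br y x z) w) - (braceD mul br x y (mul z w) - mul z (braceD mul br x y w))) - (br x (commC mul y z) w - br (mul z x) y w + br (mul y x) z w) - (br w y (commC mul x z) - (mul x (br w y z) - mul z (br w y x)))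 + (br w (commC mul x z) y - br (mul z w) x y + br (mul x w) z y) + (br y (commC mul x z) w - br (mul z y) x w + br (mul x y) z w))).
  by expand H; zsolve.
rewrite (E2 H w z x y) (E1 H x y w z) (E1 H x y z w) (E2 H w x y z) (E1 H y z w x) (E5 H y z x w) (E5 H x z y w) (E5 H x y z w) (E1 H y z x w) (E2 H w y x z) (E1 H x z w y) (E1 H x z y w); rewrite ?(mul0r' H, mulr0' H); zsolve.
Qed.

Lemma LY3 (K : fieldType) (A : lmodType K) (mul : A -> A -> A) (br : A -> A -> A -> A)
  (H : is_preLY mul br) (x y z w : A) :
  triC mul br x y (commC mul z w) = commC mul (triC mul br x y z) w + commC mul z (triC mul br x y w).
Proof.
apply: (combine (S := (br x y (commC mul z w) - (mul z (br x y w) - mul w (br x y z))) - (br y x (commC mul z w) - (mul z (br y x w) - mul w (br y x z))) - ((mul (braceD mul br x y z) w + mul (br x y z) w - mul (br y x z) w) - (braceD mul br x y (mul z w) - mul z (braceD mul br x y w))) + ((mul (braceD mul br x y w) z + mul (br x y w) z - mul (br y x w) z) - (braceD mul br x y (mul w z) - mul w (braceD mul br x y z))))).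
  by expand H; zsolve.
rewrite (E2 H x y z w) (E2 H y x z w) (E5 H x y z w) (E5 H x y w z); rewrite ?(mul0r' H, mulr0' H); zsolve.
Qed.

Lemma LY4 (K : fieldType) (A : lmodType K) (mul : A -> A -> A) (br : A -> A -> A -> A)
  (H : is_preLY mul br) (x y z w t : A) :
  triC mul br x y (triC mul br z w t) = triC mul br (triC mul br x y z) w t + triC mul br z (triC mul br x y w) t + triC mul br z w (triC mul br x y t).
Proof.
apply: (combine (S := ((br t (braceD mul br x y z) w + br t (br x y z) w - br t (br y x z) w + br t z (braceD mul br x y w) + br t z (br x y w) - br t z (br y x w)) - (braceD mul br x y (br t z w) - br (braceD mul br x y t) z w)) + mul w ((mul (braceD mul br x y z) t + mul (br x y z) t - mul (br y x z) t) - (braceD mul br x y (mul z t) - mul z (braceD mul br x y t))) + mul ((mul (braceD mul br x y z) w + mul (br x y z) w - mul (br y x z) w) - (braceD mul br x y (mul z w) - mul z (braceD mul br x y w))) t + ((mul (braceD mul br x y (mul z w)) t + mul (br x y (mul z w)) t - mul (br y x (mul z w)) t) - (braceD mul br x y (mul (mul z w) t) - mul (mul z w) (braceD mul br x y t))) - mul (br x y (commC mul z w) - (mul z (br x y w) - mul w (br x y z))) t - ((mul (braceD mul br x y z) (mul w t) + mul (br x y z) (mul w t) - mul (br y x z) (mul w t)) - (braceD mul br x y (mul z (mul w t)) - mul z (braceD mul br x y (mul w t)))) - (br (br x y z) w t - br (br x y w) z t - br x y (braceD mul br z w t) - br x y (br z w t) + br x y (br w z t) + braceD mul br z w (br x y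 t)) + (br (br y x z) w t - br (br y x w) z t - br y x (braceD mul br z w t) - br y x (br z w t) + br y x (br w z t) + braceD mul br z w (br y x t)) + ((br w (braceD mul br x y z) t + br w (br x y z) t - br w (br y x z) t + br w z (braceD mul br x y t) + br w z (br x y t) - br w z (br y x t)) - (braceD mul br x y (br w z t) - br (braceD mul br x y w) z t)) - ((br t (braceD mul br x y w) z + br t (br x y w) z - br t (br y x w) z + br t w (braceD mul br x y z) + br t w (br x y z) - br t w (br y x z)) - (braceD mul br x y (br t w z) - br (braceD mul br x y t) w z)) - ((mul (braceD mul br x y (mul w z)) t + mul (br x y (mul w z)) t - mul (br y x (mul w z)) t) - (braceD mul br x y (mul (mul w z) t) - mul (mul w z) (braceD mul br x y t))) - ((br z (braceD mul br x y w) t + br z (br x y w) t - br z (br y x w) t + br z w (braceD mul br x y t) + br z w (br x y t) - br z w (br y x t)) - (braceD mul br x y (br z w t) - br (braceD mul br x y z) w t)) - mul ((mul (braceD mul br x y w) z + mul (br x y w) z - mul (br y x w) z) - (braceD mul br x y (mul w z) - mul w (braceD mul br x y z))) t + ((mul (braceD mul br x y w) (mul z t) + mul (br x y w) (mul z t) - mul (br y x w) (mul z t)) - (braceD mul br x y (mul w (mul z t)) - mul w (braceD mul br x y (mul z t)))) - mul z ((mul (braceD mul br x y w) t + mul (br x y w) t - mul (br y x w) t) - (braceD mul br x y (mul w t) - mul w (braceD mul br x y t))) + mul (br y x (commC mul z w) - (mul z (br y x w) - mul w (br y x z))) t)).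
  by expand H; zsolve.
rewrite (E4 H x y t z w) (E5 H x y z t) (E5 H x y z w) (E5 H x y (mul z w) t) (E2 H x y z w) (E5 H x y z (mul w t)) (E3 H x y z w t) (E3 H y x z w t) (E4 H x y w z t) (E4 H x y t w z) (E5 H x y (mul w z) t) (E4 H x y z w t) (E5 H x y w z) (E5 H x y w (mul z t)) (E5 H x y w t) (E2 H y x z w); rewrite ?(mul0r' H, mulr0' H); zsolve.
Qed.

Theorem theorem3p11 (K : fieldType) (charK0 : [pchar K] =i pred0)
  (A : lmodType K) (mul : A -> A -> A) (br : A -> A -> A -> A) :
  is_preLY mul br ->
  is_LY (commC mul) (triC mul br) /\
  is_rep (commC mul) (triC mul br) (fun x z => mul x z) (fun x y z => br z x y) /\
  is_relRB (commC mul) (triC mul br) (fun x z => mul x z) (fun x y z => br z x y)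
    (fun x : A => x).
Proof.
move=> H.
do !split.
all: try solve [intros; hnf; intros; expandZ H; zsolvec].
- move=> x y z w; exact: (LY2 H x y z w).
- move=> x y z w; exact: (LY3 H x y z w).
- move=> x y z w t; exact: (LY4 H x y z w t).
- by move=> x y z v; exact: (E1 H x y v z).
- by move=> x y z v; eapply combine; last exact: (E2 H v x y z); expand H; zsolve.
- by move=> x y z v; eapply combine; last exact: (E5 H x y z v); expand H; zsolve.
- by move=> x y z w v; eapply combine; last exact: (E3 H v x y z w); expand H; zsolve.
- by move=> x y z w v; eapply combine; last exact: (E4 H x y v z w); expand H; zsolve.
Qed.
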